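(* Let $L$ be an admissible multigraph. Then every vertex of $L$ has odd degree, and this degree is greater than one.
   Context: Multigraphs may have multiple edges and loops. A trail is a sequence $v_0,e_1,v_1,\ldots,e_k,v_k$ with $e_i$ an edge joining $v_{i-1}$ and $v_i$ and no edge repeated; its length is $k$. A trail spans $L$ if every vertex of $L$ lies on it. $t(L)$ denotes the length of a longest trail in $L$. A multigraph $L$ is admissible if (A-1) $t(L)<|E(L)|$, and (A-2) for each vertex $v\in V(L)$ and each edge $e$ incident with $v$, there is a trail of length $t(L)$ beginning $v,e,\ldots$ which spans $L$. *)

(* Defs.v *)
From mathcomp Require Import all_boot.
Set Implicit Arguments. Unset Strict Implicit. Unset Printing Implicit Defensive.

(* A finite multigraph (multiple edges and loops allowed) is given by a
   finite vertex type V, a finite edge type E and, for each edge, its pair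
   of ends [ends e] (order irrelevant; a loop has equal ends). *)
Section Multigraph.
Variables (V E : finType) (ends : E -> V * V).

Definition joins (e : E) (u w : V) : bool :=
  (ends e == (u, w)) || (ends e == (w, u)).

Definition incident (e : E) (v : V) : bool :=
  ((ends e).1 == v) || ((ends e).2 == v).

(* degree: number of edge-ends at v (a loop contributes 2) *)
Definition deg (v : V) : nat :=
  #|[set e | (ends e).1 == v]| + #|[set e | (ends e).2 == v]|.

(* A walk v0, e1, v1, ..., ek, vk is encoded by v0 and the sequence
   [:: (e1,v1); ...; (ek,vk)]. *)
Fixpoint walk_ok (u : V) (s : seq (E * V)) : bool :=
  match s with
  | [::] => true
  | (e, w) :: s' => joins e u w && walk_ok w s'
  end.

Definition is_trail (v0 : V) (s : seq (E * V)) : bool :=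
  walk_ok v0 s && uniq (map fst s).

Definition trail_vertices (v0 : V) (s : seq (E * V)) : seq V :=
  v0 :: map snd s.

Definition spans (v0 : V) (s : seq (E * V)) : Prop :=
  forall v : V, v \in trail_vertices v0 s.

Definition longest_trail_length (t : nat) : Prop :=
  (exists v0 s, is_trail v0 s /\ size s = t) /\
  (forall v0 s, is_trail v0 s -> size s <= t).

(* admissible: (A-1) t(L) < |E(L)|, (A-2) for each vertex v and edge e
   incident with v, a spanning trail of length t(L) begins v, e, ... *)
Definition admissible : Prop :=
  exists t : nat, longest_trail_length t /\ t < #|E| /\
    (forall (v : V) (e : E), incident e v ->
       exists s : seq (E * V),
         [/\ is_trail v s, size s = t, ohead (map fst s) = Some e & spans v s]).

End Multigraph.

(* Main.v *)
Require Import Defs.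
From mathcomp Require Import all_boot.
Set Implicit Arguments. Unset Strict Implicit. Unset Printing Implicit Defensive.
From mathcomp Require Import zify.

Definition cnt (V E : finType) (ends : E -> V * V) (e : E) (v : V) : nat :=
  ((ends e).1 == v) + ((ends e).2 == v).

Lemma deg_sum (V E : finType) (ends : E -> V * V) v :
  deg ends v = \sum_e cnt ends e v.
Proof.
rewrite /deg /cnt big_split /= -!sum1_card.
by congr (_ + _); rewrite big_mkcond /=; apply: eq_bigr => e _; rewrite inE; case: (_ == _).
Qed.

Lemma deg_ge1 (V E : finType) (ends : E -> V * V) v e :
  cnt ends e v <= deg ends v.
Proof. by rewrite deg_sum (bigD1 e) //= leq_addr. Qed.

Lemma deg_ge2 (V E : finType) (ends : E -> V * V) v e g :
  g != e -> cnt ends e v + cnt ends g v <= deg ends v.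
Proof.
move=> Hge; rewrite deg_sum (bigD1 e) //= (bigD1 g) //= addnA leq_addr //.
Qed.

Lemma incident_cnt (V E : finType) (ends : E -> V * V) v e :
  incident ends e v -> 0 < cnt ends e v.
Proof. by rewrite /incident /cnt; case/orP => ->; rewrite ?addn1 ?add1n. Qed.

Lemma incident_joins (V E : finType) (ends : E -> V * V) v e :
  incident ends e v -> exists u, joins ends e v u.
Proof.
rewrite /incident /joins; case: (ends e) => a b /=; case/orP=> /eqP ->;
  [exists b | exists a]; by rewrite eqxx ?orbT.
Qed.

Lemma joins_sym (V E : finType) (ends : E -> V * V) e u w :
  joins ends e u w = joins ends e w u.
Proof. by rewrite /joins orbC. Qed.

Lemma joins_inc_r (V E : finType) (ends : E -> V * V) e u w :
  joins ends e u w -> incident ends e w.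
Proof. by rewrite /joins /incident; case/orP => /eqP -> /=; rewrite eqxx ?orbT. Qed.

Lemma joins_inc_l (V E : finType) (ends : E -> V * V) e u w :
  joins ends e u w -> incident ends e u.
Proof. rewrite joins_sym; exact: joins_inc_r. Qed.

Lemma cnt_joins (V E : finType) (ends : E -> V * V) e u w v :
  joins ends e u w -> cnt ends e v = (u == v) + (w == v).
Proof. by rewrite /joins /cnt; case/orP => /eqP -> //=; rewrite addnC. Qed.

Lemma walk_cat (V E : finType) (ends : E -> V * V) u s1 s2 :
  walk_ok ends u (s1 ++ s2) =
  walk_ok ends u s1 && walk_ok ends (last u (map snd s1)) s2.
Proof. by elim: s1 u => [|[e w] s1 IH] u //=; rewrite IH andbA. Qed.

Lemma walk_incident (V E : finType) (ends : E -> V * V) u s e w :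
  walk_ok ends u s -> (e, w) \in s -> incident ends e w.
Proof.
elim: s u => [|[e' w'] s IH] u //= /andP [J W].
rewrite in_cons; case/orP => [/eqP [-> ->] | H]; first exact: joins_inc_r J.
exact: IH W H.
Qed.

Lemma parity (V E : finType) (ends : E -> V * V) u s v :
  walk_ok ends u s ->
  odd (\sum_(x <- s) cnt ends x.1 v) = (u == v) (+) (last u (map snd s) == v).
Proof.
elim: s u => [|[e w] s IH] u /=; first by rewrite big_nil addbb.
case/andP => J W; rewrite big_cons /= oddD (cnt_joins v J) oddD !oddb (IH w W).
by case: (u == v); case: (w == v); case: (_ == v).
Qed.

Lemma sat_sum (V E : finType) (ends : E -> V * V) (s : seq (E * V)) v :
  uniq (map fst s) -> (forall e, incident ends e v -> e \in map fst s) ->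
  deg ends v = \sum_(x <- s) cnt ends x.1 v.
Proof.
move=> Hu Hs; rewrite deg_sum.
have -> : \sum_(x <- s) cnt ends x.1 v = \sum_(e <- map fst s) cnt ends e v by rewrite big_map.
rewrite (big_uniq _ Hu) [X in _ = X]big_mkcond; apply: eq_bigr => e _.
case: ifP => // /negbT H.
have : ~~ incident ends e v by apply: contra H; exact: Hs.
by rewrite /incident negb_or /cnt => /andP [/negbTE -> /negbTE ->].
Qed.

Lemma split_at (V E : finType) (ends : E -> V * V) u (s : seq (E * V)) a :
  a \in trail_vertices u s ->
  exists s1 s2, s = s1 ++ s2 /\ last u (map snd s1) = a.
Proof.
elim: s u => [|[e w] s IH] u /=.
  by rewrite /trail_vertices inE => /eqP ->; exists [::], [::].
rewrite /trail_vertices /= in_cons; case/orP => [/eqP ->|H].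
  by exists [::], ((e, w) :: s).
have [s1 [s2 [-> Hl]]] := IH w H.
by exists ((e, w) :: s1), s2.
Qed.

Lemma unused (V E : finType) (ends : E -> V * V) (s : seq (E * V)) :
  size s < #|E| -> exists f, f \notin map fst s.
Proof.
move=> Hs; case: (pickP (fun f => f \notin map fst s)) => [f Hf|H].
  by exists f.
exfalso; move: Hs; apply/negP; rewrite -leqNgt.
rewrite -(size_map fst); apply: leq_trans (card_size _).
apply: subset_leq_card; apply/subsetP => x _; have := H x; move/negbFE.
done.
Qed.

Lemma not_closed (V E : finType) (ends : E -> V * V) t v0 (s : seq (E * V)) :
  longest_trail_length ends t -> t < #|E| ->
  is_trail ends v0 s -> size s = t -> spans v0 s ->
  last v0 (map snd s) != v0.
Proof.
move=> [_ Hle] Hlt /andP [W U] Hsz Hsp; apply/negP => /eqP Hl.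
have [f Hf] : exists f, f \notin map fst s by apply: (@unused _ _ ends); rewrite Hsz.
have Jf : joins ends f (ends f).1 (ends f).2 by rewrite /joins -surjective_pairing eqxx.
have [s1 [s2 [Es Ha]]] := split_at ends (Hsp (ends f).1).
have := Hle (ends f).1 (s2 ++ s1 ++ [:: (f, (ends f).2)]).
rewrite Es size_cat in Hsz.
have -> : is_trail ends (ends f).1 (s2 ++ s1 ++ [:: (f, (ends f).2)]).
  move: W U Hl Hf; rewrite Es /is_trail !walk_cat !map_cat last_cat Ha => /andP [W1 W2] U Hl Hf.
  rewrite W2 Hl W1 Ha /= Jf /=.
  by rewrite catA uniq_catC /= mem_cat orbC -mem_cat uniq_catC Hf U.
move=> /(_ isT); rewrite !size_cat /= -Hsz; lia.
Qed.

Lemma start_sat (V E : finType) (ends : E -> V * V) t v (s : seq (E * V)) g :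
  longest_trail_length ends t -> is_trail ends v s -> size s = t ->
  incident ends g v -> g \in map fst s.
Proof.
move=> [_ Hle] /andP [W U] Hsz Hg; apply/negPn/negP => Hn.
have [y J] := incident_joins Hg.
have := Hle y ((g, v) :: s).
rewrite /is_trail /= -joins_sym J W Hn U => /(_ isT); rewrite Hsz; lia.
Qed.

Lemma ends_eq (V E : finType) (ends : E -> V * V) e u v y :
  joins ends e v u -> u != v -> joins ends e u y -> y = v.
Proof.
rewrite /joins; case: (ends e) => a b.
rewrite !xpair_eqE => H1 Huv H2.
case/orP: H1 => /andP [/eqP ? /eqP ?]; subst;
case/orP: H2 => /andP [/eqP ? /eqP ?]; subst => //; by rewrite eqxx in Huv.
Qed.

Theorem lemma2p6 (V E : finType) (ends : E -> V * V) :
  admissible ends -> forall v : V, odd (deg ends v) /\ 1 < deg ends v.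
Proof.
move=> [t [[Hex Hle] [Hlt HA]]] v.
have Hlong : longest_trail_length ends t by split.
have Hinc : exists e, incident ends e v.
  have : 0 < #|E| by apply: leq_ltn_trans Hlt.
  move/card_gt0P => [e0 _].
  have He0 : incident ends e0 (ends e0).1 by rewrite /incident eqxx.
  have [s [/andP [W U] _ _ Hsp]] := HA _ _ He0.
  have := Hsp v; rewrite /trail_vertices in_cons; case/orP => [/eqP ->|].
    by exists e0.
  case/mapP => x Hx ->; exists x.1; apply: (walk_incident W).
  by rewrite -surjective_pairing.
have [e He] := Hinc.
have [s [Htr Hsz Hhd Hsp]] := HA _ _ He.
have Hne := not_closed Hlong Hlt Htr Hsz Hsp.
have Hsat := start_sat Hlong Htr Hsz.
have Hdeg := sat_sum (andP Htr).2 Hsat.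
have Hodd : odd (deg ends v).
  by rewrite Hdeg (parity v (andP Htr).1) eqxx (negbTE Hne).
split => //.
have Hd1 : deg ends v != 1.
  apply/eqP => H1.
  have [u Ju] := incident_joins He.
  have Huv : u != v.
    apply/eqP => Euv; subst u.
    have := deg_ge1 ends v e; rewrite (cnt_joins v Ju) eqxx H1; lia.
  have Honly : forall g, incident ends g v -> g = e.
    move=> g Hg; apply/eqP/negPn/negP => Hge.
    have := deg_ge2 ends v Hge; have := incident_cnt Hg; have := incident_cnt He.
    rewrite H1; lia.
  have Heu : incident ends e u := joins_inc_r Ju.
  have [s' [/andP [W' U'] Hsz' Hhd' Hsp']] := HA _ _ Heu.
  case: s' W' U' Hsz' Hhd' Hsp' => [|[e' y] s'] //= /andP [Jy W'] U' Hsz' [Ee] Hsp'.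
  subst e'.
  have Ey := ends_eq Ju Huv Jy; subst y.
  case: s' W' U' Hsz' Hsp' => [|[g z] s'] /=; last first.
    case/andP => Jg _; rewrite (Honly g (joins_inc_l Jg)) in_cons eqxx //.
  move=> _ _ Ht Hsp'.
  have Hall : forall x, x = u \/ x = v.
    move=> x; have := Hsp' x; rewrite /trail_vertices /= !inE.
    by case/orP => /eqP ->; [left | right].
  have : 1 < #|E| by rewrite -Ht in Hlt.
  move/card_gt1P => [f1 [f2 [_ _ Hf12]]].
  have [f Hf] : exists f, f != e.
    case: (eqVneq f1 e) => [E1|]; last by exists f1.
    by exists f2; rewrite -E1 eq_sym.
  have Hend : forall x, (ends f).1 = x \/ (ends f).2 = x -> x = u.
    move=> x Hx; case: (Hall x) => // Exv; subst x.
    have : incident ends f v by rewrite /incident; case: Hx => ->; rewrite eqxx ?orbT.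
    by move/Honly => Efe; rewrite Efe eqxx in Hf.
  have Jf : joins ends f u u.
    have E1 : (ends f).1 = u := Hend _ (or_introl erefl).
    have E2 : (ends f).2 = u := Hend _ (or_intror erefl).
    by rewrite /joins [ends f]surjective_pairing E1 E2 eqxx.
  have := Hle v [:: (e, u); (f, u)].
  rewrite /is_trail /= Ju Jf /= inE eq_sym Hf -Ht => /(_ isT) //.
by move: Hodd Hd1; case: (deg ends v) => [|[|n]].
Qed.
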